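(* Let $\mathcal{S}^1$, $l\in K$, $\sigma\in\{+1,-1\}$ and the polyhedron $\mathcal{C}^l$ be as described in the context. Let $\bar{\pi}^l$ be an extreme point of $\mathcal{C}^l$ whose corresponding inequality is a non-trivial facet-defining inequality of $\mathrm{conv}(\mathcal{S}^1)$. Then $\bar{\pi}^l$ can be scaled in such a way that all of its components are $0$ or $1$.
   Context: Let $N=\{1,\dots,n\}$. Let $\Xi=\{x\in\mathbb{R}^n : Ex\ge f,\ 0\le x\le u\}$ be a network polytope of a directed network $G=(V,A)$ with arc set $A$ identified with $N$ ($x_i$ is the flow on arc $i$): the rows of $Ex\ge f$, indexed by a set $T$, are, for each node $v\in V$, the positive flow-balance inequality $\sum_{a\in\delta^+(v)}x_a-\sum_{a\in\delta^-(v)}x_a\ge f_v$ and the negative flow-balance inequality $-\sum_{a\in\delta^+(v)}x_a+\sum_{a\in\delta^-(v)}x_a\ge -f_v$ (here $\delta^+(v),\delta^-(v)$ are the sets of outgoing and incoming arcs of $v$); $u\in\mathbb{R}^n$ is the capacity vector. Let $\Delta_1=\{y_1\in\mathbb{R}: 0\le y_1\le 1\}$, $K=N$, and $\mathcal{S}^1=\{(x,y_1,z)\in\Xi\times\Delta_1\times\mathbb{R}^n : y_1x_k=z_k\ \forall k\in K\}$; for $k\in K$ let $A^k\in\mathbb{R}^{1\times n}$ be the unit row vector with $A^k_{1k}=1$, so the $k$-th bilinear constraint is $y_1A^kx=z_k$. Let $K_l=K\setminus\{l\}$. The vector $\pi^l=(\beta^+,\beta^-,\gamma^1,\theta,\eta^1,\rho^1,\lambda,\mu)$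 has $\beta^\pm\in\mathbb{R}^{K_l}_+$, $\gamma^1,\theta\in\mathbb{R}^T_+$, $\eta^1,\rho^1,\lambda,\mu\in\mathbb{R}^n_+$, and $\mathcal{C}^l=\{\pi^l\ge 0 : \sum_{k\in K_l}A^k_{1i}(\beta^+_k-\beta^-_k)+\sum_{t\in T}E_{ti}(\gamma^1_t-\theta_t)+\eta^1_i-\rho^1_i-\lambda_i+\mu_i=\sigma A^l_{1i}\ \ \forall i\in N\}$. The inequality corresponding to $\pi^l\in\mathcal{C}^l$ is the linear inequality obtained by summing: $(\beta^+_k-\beta^-_k)(y_1x_k-z_k)=0$ for $k\in K_l$; $\gamma^1_t\,y_1(E_{t\cdot}x-f_t)\ge0$ and $\theta_t(1-y_1)(E_{t\cdot}x-f_t)\ge 0$ for $t\in T$; $\eta^1_i\,y_1x_i\ge0$, $\rho^1_i\,y_1(u_i-x_i)\ge0$, $\lambda_i(1-y_1)x_i\ge0$, $\mu_i(1-y_1)(u_i-x_i)\ge0$ for $i\in N$; and the base equality $y_1x_l-z_l=0$ multiplied by $-\sigma$ (so that, by the defining equations of $\mathcal{C}^l$, all bilinear terms $y_1x_i$ cancel). A facet-defining inequality of $\mathrm{conv}(\mathcal{S}^1)$ is non-trivial if it is not implied by the linear constraints describing $\Xi$ and $\Delta_1$. *)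

(* Defs.v *)
From HB Require Import structures.
From mathcomp Require Import all_boot all_order all_algebra.
Set Implicit Arguments. Unset Strict Implicit. Unset Printing Implicit Defensive.
Import Order.TTheory GRing.Theory Num.Theory.
Local Open Scope ring_scope.

Section Network.
Variables (R : realFieldType) (V : finType) (n : nat).
Variables (tl hd : 'I_n -> V) (fv : V -> R) (u : 'I_n -> R).

(* Row index set T: for each node v, (v, true) = positive flow-balance row,
   (v, false) = negative flow-balance row. *)
Definition Tidx := (V * bool)%type.

(* coefficient of x_i in  sum_{a in delta^+(v)} x_a - sum_{a in delta^-(v)} x_a *)
Definition inc (v : V) (i : 'I_n) : R := (tl i == v)%:R - (hd i == v)%:R.

Definition Emat (t : Tidx) (i : 'I_n) : R :=
  if t.2 then inc t.1 i else - inc t.1 i.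

Definition fvec (t : Tidx) : R := if t.2 then fv t.1 else - fv t.1.

Definition Erow (t : Tidx) (x : 'I_n -> R) : R := \sum_(i < n) Emat t i * x i.

Definition in_Xi (x : 'I_n -> R) : Prop :=
  (forall t : Tidx, fvec t <= Erow t x) /\ (forall i, 0 <= x i /\ x i <= u i).

(* Points (x, y_1, z) of R^n x R x R^n, as functions on coordinates. *)
Definition coord := ('I_n + unit + 'I_n)%type.
Definition pt := coord -> R.
Definition px (p : pt) (i : 'I_n) : R := p (inl (inl i)).
Definition py (p : pt) : R := p (inl (inr tt)).
Definition pz (p : pt) (k : 'I_n) : R := p (inr k).

Definition Amat (k i : 'I_n) : R := (k == i)%:R.

Definition S1 (p : pt) : Prop :=
  in_Xi (px p) /\ (0 <= py p /\ py p <= 1) /\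
  (forall k : 'I_n, py p * (\sum_(i < n) Amat k i * px p i) = pz p k).

(* Index set of the components of pi^l = (beta+, beta-, gamma^1, theta, eta^1, rho^1, lambda, mu) *)
Definition Kl (l : 'I_n) := {k : 'I_n | k != l}.
Definition pidx (l : 'I_n) :=
  (Kl l + Kl l + Tidx + Tidx + 'I_n + 'I_n + 'I_n + 'I_n)%type.

Section Pi.
Variables (l : 'I_n) (pi : pidx l -> R).
Definition betap (k : Kl l) := pi (inl (inl (inl (inl (inl (inl (inl k))))))).
Definition betam (k : Kl l) := pi (inl (inl (inl (inl (inl (inl (inr k))))))).
Definition gamma1 (t : Tidx) := pi (inl (inl (inl (inl (inl (inr t)))))).
Definition theta (t : Tidx) := pi (inl (inl (inl (inl (inr t))))).
Definition eta1 (i : 'I_n) := pi (inl (inl (inl (inr i)))).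
Definition rho1 (i : 'I_n) := pi (inl (inl (inr i))).
Definition lambda (i : 'I_n) := pi (inl (inr i)).
Definition mu (i : 'I_n) := pi (inr i).
End Pi.

Definition in_C (l : 'I_n) (sigma : R) (pi : pidx l -> R) : Prop :=
  (forall j, 0 <= pi j) /\
  forall i : 'I_n,
    \sum_(k : Kl l) Amat (val k) i * (betap pi k - betam pi k)
    + \sum_(t : Tidx) Emat t i * (gamma1 pi t - theta pi t)
    + eta1 pi i - rho1 pi i - lambda pi i + mu pi i = sigma * Amat l i.

(* The left-hand side g of the inequality g(x,y_1,z) >= 0 corresponding to pi,
   written literally as the sum of the multiplied constraints. For pi in C^l
   the bilinear terms cancel and g is an affine function. *)
Definition ineq_lhs (l : 'I_n) (sigma : R) (pi : pidx l -> R) (p : pt) : R :=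
  let x := px p in let y := py p in let z := pz p in
  \sum_(k : Kl l) (betap pi k - betam pi k) *
      (y * (\sum_(i < n) Amat (val k) i * x i) - z (val k))
  + \sum_(t : Tidx) gamma1 pi t * (y * (Erow t x - fvec t))
  + \sum_(t : Tidx) theta pi t * ((1 - y) * (Erow t x - fvec t))
  + \sum_(i < n) (eta1 pi i * (y * x i) + rho1 pi i * (y * (u i - x i))
                  + lambda pi i * ((1 - y) * x i) + mu pi i * ((1 - y) * (u i - x i)))
  - sigma * (y * (\sum_(i < n) Amat l i * x i) - z l).

Definition conv (S : pt -> Prop) (p : pt) : Prop :=
  exists (k : nat) (q : 'I_k -> pt) (w : 'I_k -> R),
    (forall j, S (q j)) /\ (forall j, 0 <= w j) /\ \sum_(j < k) w j = 1 /\
    forall c, p c = \sum_(j < k) w j * q j c.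

Definition aff_indep (k : nat) (q : 'I_k -> pt) : Prop :=
  forall lam : 'I_k -> R,
    \sum_(j < k) lam j = 0 -> (forall c, \sum_(j < k) lam j * q j c = 0) ->
    forall j, lam j = 0.

Definition dim_ge (X : pt -> Prop) (d : nat) : Prop :=
  exists q : 'I_d.+1 -> pt, (forall j, X (q j)) /\ aff_indep q.

Definition dim_eq (X : pt -> Prop) (d : nat) : Prop :=
  dim_ge X d /\ ~ dim_ge X d.+1.

Definition facet_defining (P : pt -> Prop) (g : pt -> R) : Prop :=
  (forall p, P p -> 0 <= g p) /\
  exists d : nat, dim_eq P d.+1 /\ dim_eq (fun p => P p /\ g p = 0) d.

Definition implied_by_Xi_Delta (g : pt -> R) : Prop :=
  forall p : pt, in_Xi (px p) -> 0 <= py p -> py p <= 1 -> 0 <= g p.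

Definition extreme_point (I : Type) (C : (I -> R) -> Prop) (v : I -> R) : Prop :=
  C v /\
  forall (v1 v2 : I -> R) (t : R), C v1 -> C v2 -> 0 < t -> t < 1 ->
    (forall j, v j = t * v1 j + (1 - t) * v2 j) -> forall j, v1 j = v2 j.

End Network.

(* Main.v *)
Require Import Defs.
From HB Require Import structures.
From mathcomp Require Import all_boot all_order all_algebra.
From mathcomp Require Import ring lra.
Set Implicit Arguments. Unset Strict Implicit. Unset Printing Implicit Defensive.
Import Order.TTheory GRing.Theory Num.Theory.
Local Open Scope ring_scope.

Section Proof.
Variables (R : realFieldType) (V : finType) (n : nat).
Variables (tl hd : 'I_n -> V) (l : 'I_n).

Definition sgT (t : Tidx V) : R := if t.2 then 1 else -1.

Definition grp (x : pidx V l) : 'I_n + V :=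
 match x with
 | inl (inl (inl (inl (inl (inl (inl k)))))) => inl (val k)
 | inl (inl (inl (inl (inl (inl (inr k)))))) => inl (val k)
 | inl (inl (inl (inl (inl (inr t))))) => inr t.1
 | inl (inl (inl (inl (inr t)))) => inr t.1
 | inl (inl (inl (inr i))) => inl i
 | inl (inl (inr i)) => inl i
 | inl (inr i) => inl i
 | inr i => inl i end.

Definition cf (x : pidx V l) : R :=
 match x with
 | inl (inl (inl (inl (inl (inl (inl k)))))) => 1
 | inl (inl (inl (inl (inl (inl (inr k)))))) => -1
 | inl (inl (inl (inl (inl (inr t))))) => sgT t
 | inl (inl (inl (inl (inr t)))) => - sgT t
 | inl (inl (inl (inr i))) => 1
 | inl (inl (inr i)) => -1
 | inl (inr i) => -1
 | inr i => 1 end.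

Definition gsum (d : pidx V l -> R) (g : 'I_n + V) : R :=
  \sum_(x : pidx V l) (grp x == g)%:R * cf x * d x.

Definition Lhs (pi : pidx V l -> R) (i : 'I_n) : R :=
    \sum_(k : Kl l) Amat R (val k) i * (betap pi k - betam pi k)
    + \sum_(t : Tidx V) Emat R tl hd t i * (gamma1 pi t - theta pi t)
    + eta1 pi i - rho1 pi i - lambda pi i + mu pi i.

Lemma cf_sq x : cf x * cf x = 1.
Proof. case: x => [[[[[[[k|k]|t]|t]|i]|i]|i]|i]; rewrite /= ?/sgT; try case: ifP => _; ring. Qed.

Lemma sum_ind (I : finType) (F : I -> R) i : \sum_(j : I) (j == i)%:R * F j = F i.
Proof.
rewrite (bigD1 i) //= eqxx mul1r big1 ?addr0 // => j /negbTE ->; by rewrite mul0r.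
Qed.

Lemma sum0mul (I : finType) (F : I -> R) : \sum_(j : I) 0 * F j = 0.
Proof. by rewrite big1 // => j _; rewrite mul0r. Qed.

Lemma sum_inl (F : 'I_n -> R) i :
  \sum_(j < n) (inl j == inl i :> 'I_n + V)%:R * F j = F i.
Proof. exact: sum_ind. Qed.

Lemma sum_Kl (F G : Kl l -> R) i :
  \sum_(k : Kl l) (inl (val k) == inl i :> 'I_n + V)%:R * (1 * F k) +
  \sum_(k : Kl l) (inl (val k) == inl i :> 'I_n + V)%:R * (-1 * G k) =
  \sum_(k : Kl l) Amat R (val k) i * (F k - G k).
Proof. rewrite -big_split; apply: eq_bigr => k _ /=; rewrite /Amat; ring. Qed.

Lemma gsum_arc d i : gsum d (inl i) =
  \sum_(k : Kl l) Amat R (val k) i * (betap d k - betam d k)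
  + eta1 d i - rho1 d i - lambda d i + mu d i.
Proof.
rewrite /gsum; under eq_bigr => x _ do rewrite -mulrA.
rewrite !big_sumType /= !sum0mul !sum_inl sum_Kl !addr0 !mul1r !mulN1r.
by [].
Qed.

Lemma sum_T (F G : Tidx V -> R) v :
  \sum_(t : Tidx V) (inr t.1 == inr v :> 'I_n + V)%:R * (sgT t * F t) +
  \sum_(t : Tidx V) (inr t.1 == inr v :> 'I_n + V)%:R * (- sgT t * G t) =
  \sum_(t : Tidx V) (t.1 == v)%:R * (sgT t * (F t - G t)).
Proof. rewrite -big_split; apply: eq_bigr => k _ /=; ring. Qed.

Lemma gsum_node d v : gsum d (inr v) =
  \sum_(t : Tidx V) (t.1 == v)%:R * (sgT t * (gamma1 d t - theta d t)).
Proof.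
rewrite /gsum; under eq_bigr => x _ do rewrite -mulrA.
rewrite !big_sumType /= !sum0mul !add0r !addr0 sum_T.
by [].
Qed.

Lemma Lhs_gsum d i :
  Lhs d i = gsum d (inl i) + gsum d (inr (tl i)) - gsum d (inr (hd i)).
Proof.
rewrite /Lhs gsum_arc !gsum_node.
have -> : \sum_(t : Tidx V) Emat R tl hd t i * (gamma1 d t - theta d t) =
  \sum_(t : Tidx V) (t.1 == tl i)%:R * (sgT t * (gamma1 d t - theta d t)) -
  \sum_(t : Tidx V) (t.1 == hd i)%:R * (sgT t * (gamma1 d t - theta d t)).
  rewrite -sumrB; apply: eq_bigr => t _.
  rewrite /Emat /inc /sgT ![t.1 == _]eq_sym; case: (t.2); ring.
ring.
Qed.

Lemma gsum_lin p q e g :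
  gsum (fun x => p x + e * q x) g = gsum p g + e * gsum q g.
Proof.
rewrite /gsum mulr_sumr -big_split; apply: eq_bigr => x _ /=; ring.
Qed.

Lemma Lhs_lin p q e i :
  Lhs (fun x => p x + e * q x) i = Lhs p i + e * Lhs q i.
Proof. rewrite !Lhs_gsum !gsum_lin; ring. Qed.

Lemma ext_kernel sigma (pi : pidx V l -> R) :
  extreme_point (in_C tl hd sigma) pi ->
  forall d : pidx V l -> R, (forall j, pi j = 0 -> d j = 0) ->
  (forall i, Lhs d i = 0) -> forall j, d j = 0.
Proof.
move=> [[pi0 piC] ext] d dsupp dker.
pose M := \sum_(j : pidx V l) (if pi j == 0 then 0 else `|d j| / pi j).
have M0 : 0 <= M.
  apply: sumr_ge0 => j _; case: ifP => // /negbT pj.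
  by apply: divr_ge0; [exact: normr_ge0 | exact: pi0].
pose e := (1 + M)^-1.
have e0 : 0 < e by rewrite invr_gt0; lra.
have e1 : e * (1 + M) = 1 by rewrite mulVf //; apply/eqP => h; lra.
have key : forall j, e * `|d j| <= pi j.
  move=> j; case: (eqVneq (pi j) 0) => pj.
    by rewrite (dsupp _ pj) normr0 mulr0 pj.
  have pjp : 0 < pi j by rewrite lt0r pj pi0.
  have hx : `|d j| / pi j <= M.
    rewrite /M (bigD1 j) //= (negbTE pj) lerDl.
    apply: sumr_ge0 => k _; case: ifP => // /negbT pk.
    by apply: divr_ge0; [exact: normr_ge0 | exact: pi0].
  have hx2 : `|d j| / pi j * pi j = `|d j| by rewrite divfK.
  have dn : 0 <= `|d j| := normr_ge0 _.
  nra.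
have kp : forall j, 0 <= pi j + e * d j /\ 0 <= pi j - e * d j.
  move=> j; have := key j; have := ler_norm (d j); have := ler_norm (- d j).
  rewrite normrN => h1 h2 h3; split; nra.
have C1 : in_C tl hd sigma (fun x => pi x + e * d x).
  split=> [j|i]; first by case: (kp j).
  change (Lhs (fun x => pi x + e * d x) i = sigma * Amat R l i).
  by rewrite Lhs_lin dker mulr0 addr0; apply: piC.
have C2 : in_C tl hd sigma (fun x => pi x + (- e) * d x).
  split=> [j|i]; first by case: (kp j); rewrite mulNr.
  change (Lhs (fun x => pi x + (- e) * d x) i = sigma * Amat R l i).
  by rewrite Lhs_lin dker mulr0 addr0; apply: piC.
have := ext _ _ (2^-1) C1 C2.
have h2 : 0 < 2^-1 :> R by rewrite invr_gt0.
have h3 : 2^-1 < 1 :> R by rewrite invf_lt1 // ltr1n.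
move=> /(_ h2 h3) H j.
have hh : (2^-1 : R) * 2 = 1 by rewrite mulVf // pnatr_eq0.
have hv : forall k, pi k = 2^-1 * (pi k + e * d k) + (1 - 2^-1) * (pi k + - e * d k).
  move=> k; nra.
have hj := H hv j.
have : e * d j = 0 by lra.
by move/eqP; rewrite mulf_eq0 (gt_eqF e0) => /eqP.
Qed.

Lemma cf_pm x : cf x = 1 \/ cf x = -1.
Proof.
case: x => [[[[[[[k|k]|t]|t]|i]|i]|i]|i]; rewrite /= ?/sgT; try case: ifP => _;
  rewrite ?opprK; auto.
Qed.

Lemma gsum_pt x c g : gsum (fun z => (z == x)%:R * c) g = (grp x == g)%:R * cf x * c.
Proof.
rewrite /gsum (bigD1 x) //= eqxx big1 => [|z /negbTE ->]; first by rewrite mul1r addr0.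
by rewrite mul0r mulr0.
Qed.

Section Ext.
Variables (sigma : R) (pi : pidx V l -> R).
Hypothesis ext : extreme_point (in_C tl hd sigma) pi.

Let S g := gsum pi g.

Lemma at_most_one x y : x != y -> grp x = grp y -> pi x != 0 -> pi y != 0 -> False.
Proof.
move=> xy gxy px py.
pose d := fun z => (z == x)%:R * cf y + (-1) * ((z == y)%:R * cf x).
have gd : forall g, gsum d g = 0.
  by move=> g; rewrite /d gsum_lin !gsum_pt gxy; ring.
have := ext_kernel ext (d := d).
have supp : forall j, pi j = 0 -> d j = 0.
  move=> j pj; rewrite /d; have jx : (j == x) = false.
    by apply/negbTE; apply: contra px => /eqP <-; rewrite pj.
  have jy : (j == y) = false.
    by apply/negbTE; apply: contra py => /eqP <-; rewrite pj.
  by rewrite jx jy !mul0r mulr0 addr0.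
move=> /(_ supp) /(_ _) H.
have : d x = 0 by apply: H => i; rewrite Lhs_gsum !gd; ring.
rewrite /d eqxx (negbTE xy) /= mul1r mul0r mulr0 addr0 => h.
by have := cf_sq y; rewrite h mul0r => /eqP; rewrite eq_sym oner_eq0.
Qed.

Lemma val_S x : pi x != 0 -> pi x = cf x * S (grp x).
Proof.
move=> px; rewrite /S /gsum (bigD1 x) //= eqxx big1 => [|z zx].
  by rewrite addr0 mul1r mulrA cf_sq mul1r.
case: (eqVneq (grp z) (grp x)) => gz; last first.
  by rewrite !mul0r.
case: (eqVneq (pi z) 0) => pz; first by rewrite pz mulr0.
by case: (at_most_one zx gz pz px).
Qed.

Lemma scaled (w : 'I_n + V -> R) :
  (forall i, w (inl i) * S (inl i) + w (inr (tl i)) * S (inr (tl i))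
             - w (inr (hd i)) * S (inr (hd i)) = 0) ->
  forall g, S g != 0 -> w g = 0.
Proof.
move=> hw g Sg.
pose d := fun z => pi z * w (grp z).
have gd : forall g, gsum d g = w g * S g.
  move=> g'; rewrite /S /gsum mulr_sumr; apply: eq_bigr => z _.
  rewrite /d; case: (eqVneq (grp z) g') => [<-|]; first by ring.
  by move=> _; rewrite !mul0r mulr0.
have supp : forall j, pi j = 0 -> d j = 0 by move=> j pj; rewrite /d pj mul0r.
have H := ext_kernel ext supp.
have H2 : forall j, d j = 0 by apply: H => i; rewrite Lhs_gsum !gd; apply: hw.
case: (pickP (fun z => (grp z == g) && (pi z != 0))) => [z /andP [/eqP gz pz]|none].
  by have := H2 z; rewrite /d gz => /eqP; rewrite mulf_eq0 (negbTE pz) => /eqP.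
exfalso; move/negP: Sg; apply; apply/eqP.
rewrite /S /gsum big1 // => z _; case: (eqVneq (grp z) g) => gz.
  by have := none z; rewrite gz eqxx /= => /negbT; rewrite negbK => /eqP ->; rewrite mulr0.
by rewrite mul0r mul0r.
Qed.

Local Notation p v := (S (inr v)).
Local Notation r i := (S (inl i)).

Lemma eqn i : r i + p (tl i) - p (hd i) = sigma * (l == i)%:R.
Proof. by rewrite /S -Lhs_gsum; case: ext => [[_ h] _]; apply: h. Qed.

Lemma divK0 (a b : R) : (b = 0 -> a = 0) -> a / b * b = a.
Proof.
case: (eqVneq b 0) => [-> /(_ erefl) ->|bn _]; first by rewrite mulr0.
by rewrite divfK.
Qed.

Lemma additive (f : R -> R) : f 0 = 0 ->
  (r l = 0 -> f (p (tl l)) = f (p (hd l))) -> forall v, f (p v) = 0.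
Proof.
move=> f0 hl.
pose w := fun g => match g with
  | inl i => - (f (p (tl i)) - f (p (hd i))) / r i
  | inr v => f (p v) / p v end.
have hv : forall v, f (p v) / p v * p v = f (p v).
  by move=> v; apply: divK0 => ->.
have hw : forall i, w (inl i) * S (inl i) + w (inr (tl i)) * S (inr (tl i))
             - w (inr (hd i)) * S (inr (hd i)) = 0.
  move=> i; rewrite /w !hv.
  case: (eqVneq (r i) 0) => ri.
    rewrite ri mulr0 add0r.
    case: (eqVneq i l) => [il|il].
      by move: ri; rewrite il => /hl ->; rewrite subrr.
    have li : (l == i) = false by rewrite eq_sym; apply/negbTE.
    have h := eqn i; rewrite ri li mulr0 in h.
    have -> : p (tl i) = p (hd i) by lra.
    by rewrite subrr.
  rewrite divfK //; ring.
move=> v; case: (eqVneq (p v) 0) => [->|pv]; first by [].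
have := scaled hw pv; rewrite /w => /eqP; rewrite mulf_eq0 invr_eq0 (negbTE pv) orbF.
by move/eqP.
Qed.

Lemma N1 v0 : p v0 != 0 ->
  r l = 0 /\ (p (tl l) == p v0) != (p (hd l) == p v0).
Proof.
move=> pv0; pose f := fun x => (x == p v0)%:R : R.
have f0 : f 0 = 0 by rewrite /f eq_sym (negbTE pv0).
have bad : (r l = 0 -> f (p (tl l)) = f (p (hd l))) -> False.
  move=> h; have := additive f0 h v0; rewrite /f eqxx => /eqP; by rewrite oner_eq0.
case: (eqVneq (r l) 0) => rl; last by exfalso; apply: bad => h; rewrite h eqxx in rl.
split=> //; case: (boolP ((p (tl l) == p v0) != (p (hd l) == p v0))) => // hx.
by exfalso; apply: bad => _; rewrite /f; move/negPn/eqP: hx => ->.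
Qed.

Lemma N2 v0 : p v0 != 0 -> r l = 0 -> (p (tl l) != 0) != (p (hd l) != 0).
Proof.
move=> pv0 rl; pose f := fun x : R => (x != 0)%:R : R.
have f0 : f 0 = 0 by rewrite /f eqxx.
case: (boolP ((p (tl l) != 0) != (p (hd l) != 0))) => // hx.
have hl : r l = 0 -> f (p (tl l)) = f (p (hd l)).
  by move=> _; rewrite /f; move/negPn/eqP: hx => ->.
by have := additive f0 hl v0; rewrite /f pv0 => /eqP; rewrite oner_eq0.
Qed.

Definition u01 (x : R) := x = 0 \/ x = 1 \/ x = -1.

Ltac u01tac := first [by left; ring | by right; left; ring | by right; right; ring].

Lemma u01_sub a b m : (a = 0 \/ a = m) -> (b = 0 \/ b = m) -> (m = 1 \/ m = -1) -> u01 (a - b).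
Proof. by rewrite /u01; case=> ha; case=> hb; case=> hm; rewrite ?ha ?hb ?hm; u01tac. Qed.

Hypothesis hs : sigma = 1 \/ sigma = -1.

Lemma allS g : u01 (S g).
Proof.
case: (pickP (fun v => p v != 0)) => [v0 /= pv0|none].
  have [rl _] := N1 pv0.
  have hn := N2 pv0 rl.
  have el := eqn l; rewrite rl eqxx mulr1 add0r in el.
  pose m := p (tl l) + p (hd l).
  have hm : m = 1 \/ m = -1.
    move: hn; case: (eqVneq (p (tl l)) 0) => [h|h]; case: (eqVneq (p (hd l)) 0) => [h'|h'] //= _;
      rewrite /m; case: hs => hs'; rewrite hs' in el; lra.
  have pm : forall v, p v = 0 \/ p v = m.
    move=> v; case: (eqVneq (p v) 0) => pv; first by left.
    right; have [_ hx] := N1 pv; move: hn hx.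
    case: (eqVneq (p (tl l)) 0) => [h|h]; case: (eqVneq (p (hd l)) 0) => [h'|h'] //= _;
      rewrite /m ?h ?h'.
    - move=> H; apply/eqP; rewrite add0r eq_sym; move: H.
      by rewrite [0 == _]eq_sym (negbTE pv); case: (p (hd l) == p v).
    - move=> H; apply/eqP; rewrite addr0 eq_sym; move: H.
      by rewrite [0 == _]eq_sym (negbTE pv); case: (p (tl l) == p v).
  case: g => [i|v]; last first.
    by case: (pm v) => ->; [u01tac | case: hm => ->; u01tac].
  case: (eqVneq i l) => [->|il]; first by rewrite rl; left.
  have li : (l == i) = false by rewrite eq_sym; apply/negbTE.
  have := eqn i; rewrite li mulr0 => h.
  have -> : r i = p (hd i) - p (tl i) by lra.
  exact: u01_sub (pm _) (pm _) hm.
have pz : forall v, p v = 0 by move=> v; move/negbT: (none v); rewrite negbK => /eqP.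
case: g => [i|v]; last by rewrite pz; left.
have := eqn i; rewrite !pz subr0 addr0 => ->.
by case: (l == i); rewrite ?mulr1 ?mulr0; [case: hs => ->; u01tac | u01tac].
Qed.

End Ext.

End Proof.

Theorem proposition1 (R : realFieldType) (V : finType) (n : nat)
    (tl hd : 'I_n -> V) (fv : V -> R) (u : 'I_n -> R)
    (l : 'I_n) (sigma : R) (pibar : pidx V l -> R) :
  (forall a : 'I_n, tl a != hd a) ->
  (sigma = 1 \/ sigma = -1) ->
  extreme_point (in_C tl hd sigma) pibar ->
  facet_defining (conv (S1 tl hd fv u)) (ineq_lhs tl hd fv u sigma pibar) ->
  ~ implied_by_Xi_Delta tl hd fv u (ineq_lhs tl hd fv u sigma pibar) ->
  exists c : R, 0 < c /\ forall j : pidx V l, c * pibar j = 0 \/ c * pibar j = 1.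
Proof.
move=> _ hs hext _ _; exists 1; split; first exact: ltr01.
move=> j; rewrite mul1r.
case: (eqVneq (pibar j) 0) => pj; first by left.
right.
have pos : 0 <= pibar j by case: hext => [[h _] _]; apply: h.
have ppos : 0 < pibar j by rewrite lt0r pj pos.
have hv := val_S hext pj.
have hS := allS hext hs (grp j).
have hc := cf_pm R j.
case: hc => hc; rewrite /u01 in hS; case: hS => [hS|[hS|hS]]; rewrite hc hS in hv; lra.
Qed.
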